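(* Let $1<t'<t$ be real, let $X$ be feasible for $Q(t)$ and let $x=\operatorname{diag}(X)$. Set $\alpha=\frac{t'(t'-1)}{t(t-1)}$ and $\beta=\frac{t'(t-t')}{t(t-1)}$. Then $X':=\alpha X+\beta\operatorname{Diag}(x)$ is feasible for $Q(t')$.
   Context: Let $G$ be a simple graph with vertex set $V=\{1,\dots,n\}$, edge set $E$ and adjacency matrix $A$. Let $e$ be the all-ones vector, $\langle M,N\rangle=\operatorname{trace}(M^TN)$, $X\geq 0$ mean entrywise nonnegativity, and $\operatorname{Diag}(x)$ the diagonal matrix with diagonal $x$. For real $t\geq 1$, $Q(t)$ is the semidefinite program $$\min \tfrac12\langle A,X\rangle\ \text{ s.t. } X\succeq 0,\ X\geq 0,\ \operatorname{trace}(X)=t,\ Xe=t\operatorname{diag}(X)$$ over symmetric $n\times n$ matrices $X$; ''feasible for $Q(t)$'' means satisfying these constraints. *)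

(* Defs.v *)
From mathcomp Require Import all_boot all_order all_algebra.
Set Implicit Arguments. Unset Strict Implicit. Unset Printing Implicit Defensive.
Import Order.TTheory GRing.Theory Num.Theory.
Local Open Scope ring_scope.

Definition mdiag (R : ringType) (n : nat) (X : 'M[R]_n) : 'cV[R]_n :=
  \col_i X i i.

Definition Diag (R : ringType) (n : nat) (x : 'cV[R]_n) : 'M[R]_n :=
  diag_mx x^T.

Definition psd (R : realFieldType) (n : nat) (X : 'M[R]_n) : Prop :=
  X^T = X /\ forall v : 'cV[R]_n, 0 <= (v^T *m X *m v) 0 0.

Definition feasibleQ (R : realFieldType) (n : nat) (t : R) (X : 'M[R]_n) : Prop :=
  [/\ psd X,
      (forall i j, 0 <= X i j),
      \tr X = t
    & X *m const_mx 1 = t *: mdiag X].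

(* Main.v *)
Require Import Defs.
From mathcomp Require Import all_boot all_order all_algebra.
From mathcomp Require Import ring lra.
Import Order.TTheory GRing.Theory Num.Theory.
Local Open Scope ring_scope.

Theorem mainTheorem9 (R : realFieldType) (n : nat) (t t' : R) (X : 'M[R]_n) :
  1 < t' -> t' < t -> feasibleQ t X ->
  let alpha := t' * (t' - 1) / (t * (t - 1)) in
  let beta := t' * (t - t') / (t * (t - 1)) in
  feasibleQ t' (alpha *: X + beta *: Diag (mdiag X)).
Proof.
move=> h1 h2 [[Xs Xp] Xn Xt Xe] a b.
have t0 : t != 0 by apply/eqP; lra.
have t1 : t - 1 != 0 by apply/eqP; lra.
have d0 : 0 < t * (t - 1) by apply: mulr_gt0; lra.
have a0 : 0 <= a by rewrite /a; apply: divr_ge0; [apply: mulr_ge0|]; lra.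
have b0 : 0 <= b by rewrite /b; apply: divr_ge0; [apply: mulr_ge0|]; lra.
have hab : a + b = t' / t by rewrite /a /b; field; rewrite t0 t1.
have hat : a * t + b = t' * (t' / t) by rewrite /a /b; field; rewrite t0 t1.
have DE : forall i j, Diag (mdiag X) i j = X i i *+ (i == j).
  by move=> i j; rewrite /Diag /diag_mx !mxE.
split.
- split.
    apply/matrixP=> i j; rewrite !mxE ?DE.
    have -> : X j i = X i j by rewrite -[in RHS]Xs mxE.
    by case: (eqVneq i j) => [->|ij]; rewrite ?eqxx // eq_sym (negbTE ij).
  move=> v.
  rewrite mulmxDr mulmxDl -!scalemxAr -!scalemxAl.
  rewrite [X in 0 <= X]mxE [X in 0 <= X + _]mxE [X in 0 <= _ + X]mxE.
  apply: addr_ge0; first exact: mulr_ge0.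
  apply: mulr_ge0 => //.
  rewrite !mxE; apply: sumr_ge0 => j _.
  rewrite !mxE (bigD1 j) //= big1 ?addr0; last first.
    by move=> k /negbTE kj; rewrite ?DE kj mulr0n mulr0.
  rewrite ?DE eqxx mulr1n !mxE.
  rewrite mulrC mulrA; apply: mulr_ge0 => //.
  by rewrite -expr2 sqr_ge0.
- by move=> i j; rewrite !mxE ?DE; apply: addr_ge0; apply: mulr_ge0 => //;
    apply: mulrn_wge0.
- rewrite /mxtrace.
  under eq_bigr do rewrite !mxE ?DE eqxx mulr1n.
  rewrite big_split /= -!mulr_sumr.
  have -> : \sum_i X i i = t by rewrite -Xt.
  rewrite -mulrDl hab; field; exact: t0.
- apply/matrixP=> i k; rewrite !mxE.
  have hs : \sum_j X i j = t * X i i.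
    by have := congr1 (fun M : 'M[R]_(n,1) => M i k) Xe; rewrite !mxE => <-; apply: eq_bigr => j _; rewrite mxE mulr1.
  under eq_bigr do rewrite !mxE mulr1.
  rewrite eqxx mulr1n big_split /= -!mulr_sumr.
  rewrite hs (bigD1 i) //= big1 ?addr0; last first.
    by move=> j /negbTE ij; rewrite eq_sym ij mulr0n.
  rewrite eqxx mulr1n.
  have e : a * (t * X i i) + b * X i i = (a * t + b) * X i i by ring.
  rewrite e hat -hab; ring.
Qed.
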